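(* There exists a CPwL map $F:\mathbb{R}^2\to\mathbb{R}^2$ such that \[ F(E(t))=E(r(t))\qquad\text{for all } t\in[0,1]. \] Moreover, $F$ admits an exact finite ReLU network realization (of some fixed width and depth).
   Context: $r:[0,1]\to[0,1]$ is defined by $r(t)=2t-\lfloor 2t\rfloor$ for $t\in[0,1)$ and $r(1)=1$. Let $\Gamma$ be the boundary of the triangle with vertices $a_0=(0,0)$, $a_1=(1,1)$, $a_2=(1,0)$, parametrized by $E:[0,1]\to\Gamma$, \[ E(t)=\begin{cases}(3t,3t),&0\le t\le\tfrac13,\\(1,2-3t),&\tfrac13\le t\le\tfrac23,\\(3-3t,0),&\tfrac23\le t\le1.\end{cases} \] CPwL means continuous piecewise linear (continuous, and affine on the cells of a finite polygonal subdivision of every compact set). *)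

(* Defs.v *)
From HB Require Import structures.
From mathcomp Require Import all_boot all_order all_algebra.
From mathcomp Require Import all_classical all_reals all_analysis.
Set Implicit Arguments. Unset Strict Implicit. Unset Printing Implicit Defensive.
Import Order.TTheory GRing.Theory Num.Theory.
Import numFieldNormedType.Exports.
Local Open Scope ring_scope.

Section Defs.
Variable R : realType.

Definition px (x : 'cV[R]_2) : R := x (inord 0) ord0.
Definition py (x : 'cV[R]_2) : R := x (inord 1) ord0.
Definition pt (a b : R) : 'cV[R]_2 := \col_(i < 2) (if val i == 0%N then a else b).

Definition rmap (t : R) : R :=
  if t == 1 then 1 else 2 * t - (Num.floor (2 * t))%:~R.

(* parametrization E of the boundary of the triangle (0,0),(1,1),(1,0) *)
Definition Epar (t : R) : 'cV[R]_2 :=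
  if t <= 3^-1 then pt (3 * t) (3 * t)
  else if t <= 2 / 3 then pt 1 (2 - 3 * t)
  else pt (3 - 3 * t) 0.

(* closed half-plane {x | a1 x1 + a2 x2 <= c} encoded by (a1, a2, c);
   a convex polygonal cell is a finite intersection of closed half-planes *)
Definition in_cell (C : seq (R * R * R)) (x : 'cV[R]_2) : Prop :=
  forall h, h \in C -> h.1.1 * px x + h.1.2 * py x <= h.2.

Definition affine_on (F : 'cV[R]_2 -> 'cV[R]_2) (C : seq (R * R * R)) : Prop :=
  exists (A : 'M[R]_2) (b : 'cV[R]_2), forall x, in_cell C x -> F x = A *m x + b.

(* CPwL: continuous, and for every compact set (every compact set lies in
   some box [-M,M]^2) a finite family of polygonal cells covers it with F
   affine on each cell *)
Definition CPwL (F : 'cV[R]_2 -> 'cV[R]_2) : Prop :=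
  continuous F /\
  forall M : R, exists cells : seq (seq (R * R * R)),
    (forall x, `|px x| <= M -> `|py x| <= M -> exists2 C, C \in cells & in_cell C x) /\
    (forall C, C \in cells -> affine_on F C).

Definition relu (a : R) : R := Num.max a 0.

Inductive relu_net : nat -> nat -> Type :=
| OutLayer (m n : nat) (W : 'M[R]_(n, m)) (b : 'cV[R]_n) : relu_net m n
| HiddenLayer (m k n : nat) (W : 'M[R]_(k, m)) (b : 'cV[R]_k) (rest : relu_net k n) :
    relu_net m n.

Fixpoint net_eval (m n : nat) (N : relu_net m n) : 'cV[R]_m -> 'cV[R]_n :=
  match N in relu_net m n return 'cV[R]_m -> 'cV[R]_n with
  | OutLayer _ _ W b => fun x => W *m x + b
  | HiddenLayer _ _ _ W b rest => fun x => net_eval rest (map_mx relu (W *m x + b))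
  end.

End Defs.

(* Main.v *)
Require Import Defs.
From HB Require Import structures.
From mathcomp Require Import all_boot all_order all_algebra.
From mathcomp Require Import all_classical all_reals all_analysis.
From mathcomp Require Import lra ring.
Import Order.TTheory GRing.Theory Num.Theory.
Import numFieldNormedType.Exports.
Local Open Scope ring_scope.
Section S.
Variable R : realType.
Lemma pxE0 (x : 'cV[R]_2) : px x = x ord0 ord0.
Proof. by rewrite /px; congr (x _ _); apply/val_inj; rewrite /= inordK. Qed.
Lemma pyE0 (x : 'cV[R]_2) : py x = x (lift ord0 ord0) ord0.
Proof. by rewrite /py; congr (x _ _); apply/val_inj; rewrite /= inordK. Qed.

Lemma pxE (a b : R) : px (pt a b) = a.
Proof. by rewrite /px /pt mxE /= inordK. Qed.
Lemma pyE (a b : R) : py (pt a b) = b.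
Proof. by rewrite /py /pt mxE /= inordK. Qed.
Lemma relu_pos (a : R) : 0 <= a -> relu a = a.
Proof. by move=> h; rewrite /relu max_l. Qed.
Lemma relu_neg (a : R) : a <= 0 -> relu a = 0.
Proof. by move=> h; rewrite /relu max_r. Qed.
Definition W1 : 'M[R]_(5,2) := \matrix_(i<5, j<2)
  (nth 0 (nth [::] [:: [:: 1; 0]; [:: -1;0]; [::0;1];[::0;-1];[::1;-1]] i) j).
Definition b1 : 'cV[R]_5 := \col_(i<5) nth 0 [:: -2^-1; 2^-1; -2^-1; 2^-1; -2^-1] i.
Definition W2 : 'M[R]_(2,5) := \matrix_(i<2,j<5)
  nth 0 (nth [::] [:: [:: -2;-2;2;0;2]; [:: -2;0;0;-2;4]] i) j.
Definition b2 : 'cV[R]_2 := \col_(i<2) 1.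
Definition Net : relu_net R 2 2 := HiddenLayer W1 b1 (OutLayer W2 b2).

Definition fx (x : 'cV[R]_2) : R :=
  - 2 * relu (px x - 2^-1) - 2 * relu (2^-1 - px x) + 2 * relu (py x - 2^-1)
  + 2 * relu (px x - py x - 2^-1) + 1.
Definition fy (x : 'cV[R]_2) : R :=
  - 2 * relu (px x - 2^-1) - 2 * relu (2^-1 - py x) 
  + 4 * relu (px x - py x - 2^-1) + 1.

Lemma NetE x : net_eval Net x = pt (fx x) (fy x).
Proof.
rewrite /= /fx /fy pxE0 pyE0.
apply/matrixP => i j; rewrite (ord1 j) !mxE.
rewrite !big_ord_recl big_ord0 !mxE.
rewrite !big_ord_recl !big_ord0 !mxE /=.
case: i => [[|[|k]] Hk] //=;
rewrite !(mul1r, mul0r, mulN1r, add0r, addr0) ?(addrC (- _) (2^-1)); ring.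
Qed.
Definition cont (f : 'cV[R]_2 -> R) := forall x, {for x, continuous f}.
Lemma cont_px : cont (@px R).
Proof. move=> x; exact: coord_continuous. Qed.
Lemma cont_py : cont (@py R).
Proof. move=> x; exact: coord_continuous. Qed.
Lemma cont_cst c : cont (fun=> c).
Proof. move=> x; exact: cst_continuous. Qed.
Lemma cont_add f g : cont f -> cont g -> cont (fun x => f x + g x).
Proof. move=> hf hg x; exact: continuousD. Qed.
Lemma cont_sub f g : cont f -> cont g -> cont (fun x => f x - g x).
Proof. move=> hf hg x; exact: continuousB. Qed.
Lemma cont_scal c f : cont f -> cont (fun x => c * f x).
Proof. move=> hf x; apply: continuousM => //; exact: cst_continuous. Qed.
Lemma cont_opp f : cont f -> cont (fun x => - f x).
Proof. move=> hf x; exact: continuousN. Qed.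
Lemma cont_relu f : cont f -> cont (fun x => relu (f x)).
Proof. move=> hf x; apply: continuous_max => //; exact: cst_continuous. Qed.
Lemma cont_pt u v : cont u -> cont v -> continuous (fun x => pt (u x) (v x)).
Proof.
move=> hu hv.
have -> : (fun x => pt (u x) (v x)) = (fun x => u x *: pt 1 0 + v x *: pt 0 1).
  apply/funext => x; apply/matrixP => i j; rewrite !mxE.
  by case: ifP => _; rewrite ?mulr1 ?mulr0 ?addr0 ?add0r.
move=> x; apply: (@continuousD _ _ _ (fun x => u x *: pt 1 0) (fun x => v x *: pt 0 1)); exact: continuousZr_tmp.
Qed.
Lemma rmap1 (t : R) : 0 <= t < 2^-1 -> rmap t = 2 * t.
Proof.
move=> h; rewrite /rmap ifF; last by apply/negbTE; apply/eqP => e; lra.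
rewrite (@floor_def _ _ 0); first by rewrite subr0.
rewrite /= ?intr0 ?add0r ?mulr1z; lra.
Qed.
Lemma rmap2 (t : R) : 2^-1 <= t < 1 -> rmap t = 2 * t - 1.
Proof.
move=> h; rewrite /rmap ifF; last by apply/negbTE; apply/eqP => e; lra.
rewrite (@floor_def _ _ 1); first by rewrite mulr1z.
rewrite /= mulr1z -[(1 + 1)%:~R]/((1 + 1)%:~R : R) intrD mulr1z; lra.
Qed.
Lemma Epar1 (t : R) : t <= 3^-1 -> Epar t = pt (3 * t) (3 * t).
Proof. by move=> h; rewrite /Epar h. Qed.
Lemma Epar2 (t : R) : 3^-1 < t <= 2 / 3 -> Epar t = pt 1 (2 - 3 * t).
Proof. by case/andP => h1 h2; rewrite /Epar ifF ?h2 //; apply/negbTE; rewrite -ltNge. Qed.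
Lemma Epar3 (t : R) : 2 / 3 < t -> Epar t = pt (3 - 3 * t) 0.
Proof.
move=> h; rewrite /Epar ifF ?ifF //; apply/negbTE; rewrite -ltNge //.
apply: lt_trans h; lra.
Qed.

Ltac relus := repeat match goal with |- context [relu ?a] =>
  first [ have -> : relu a = a by (apply: relu_pos; lra)
        | have -> : relu a = 0 by (apply: relu_neg; lra) ] end.

Lemma bdry (t : R) : 0 <= t <= 1 -> net_eval Net (Epar t) = Epar (rmap t).
Proof.
case/andP => t0 t1.
have [h1|h1] := leP t (6^-1).
  rewrite Epar1; last lra. rewrite rmap1; last lra. rewrite Epar1; last lra.
  rewrite NetE /fx /fy !pxE !pyE; relus; congr pt; lra.
have [h2|h2] := leP t (3^-1).
  rewrite Epar1; last lra. rewrite rmap1; last lra. rewrite Epar2; last lra.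
  rewrite NetE /fx /fy !pxE !pyE; relus; congr pt; lra.
have [h3|h3] := ltP t (2^-1).
  rewrite Epar2; last lra. rewrite rmap1; last lra. rewrite Epar3; last lra.
  rewrite NetE /fx /fy !pxE !pyE; relus; congr pt; lra.
have [h4|h4] := leP t (2/3).
  rewrite Epar2; last lra. rewrite rmap2; last lra. rewrite Epar1; last lra.
  rewrite NetE /fx /fy !pxE !pyE; relus; congr pt; lra.
have [h5|h5] := leP t (5/6).
  rewrite Epar3; last lra. rewrite rmap2; last lra. rewrite Epar2; last lra.
  rewrite NetE /fx /fy !pxE !pyE; relus; congr pt; lra.
have [h6|h6] := ltP t 1.
  rewrite Epar3; last lra. rewrite rmap2; last lra. rewrite Epar3; last lra.
  rewrite NetE /fx /fy !pxE !pyE; relus; congr pt; lra.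
have -> : t = 1 by lra.
rewrite /rmap eqxx Epar3; last lra.
rewrite NetE /fx /fy !pxE !pyE; relus; congr pt; lra.
Qed.
Lemma affE (a11 a12 c1 a21 a22 c2 : R) :
  exists (A : 'M[R]_2) (B : 'cV[R]_2), forall x,
    A *m x + B = pt (a11 * px x + a12 * py x + c1) (a21 * px x + a22 * py x + c2).
Proof.
exists (\matrix_(i<2,j<2) nth 0 (nth [::] [:: [:: a11; a12]; [:: a21; a22]] i) j).
exists (pt c1 c2) => x.
rewrite pxE0 pyE0; apply/matrixP => i j; rewrite (ord1 j) !mxE.
rewrite !big_ord_recl big_ord0 !mxE.
case: i => [[|[|k]] Hk] //=; ring.
Qed.

Definition hp (s : bool) (h : R * R * R) : R * R * R :=
  if s then (- h.1.1, - h.1.2, - h.2) else h.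
Definition cell (s : bool * bool * bool) : seq (R * R * R) :=
  [:: hp s.1.1 (1, 0, 2^-1); hp s.1.2 (0, 1, 2^-1); hp s.2 (1, -1, 2^-1)].
Definition cells := map cell (enum {: bool * bool * bool}).

Ltac contt := repeat match goal with |- cont _ =>
  first [apply: cont_add | apply: cont_sub | apply: cont_opp | apply: cont_scal
       | apply: cont_relu | apply: cont_px | apply: cont_py | apply: cont_cst] end.

Lemma CPwL_Net : CPwL (net_eval Net).
Proof.
split.
  have -> : net_eval Net = (fun x => pt (fx x) (fy x)) by apply/funext => x; exact: NetE.
  apply: cont_pt.
    rewrite /fx; contt.
  rewrite /fy; contt.
move=> M; exists cells; split.
  move=> x _ _.
  exists (cell (0 <= px x - 2^-1, 0 <= py x - 2^-1, 0 <= px x - py x - 2^-1)).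
    by apply: map_f; rewrite mem_enum.
  move=> h; rewrite !inE /hp /= => /or3P [] /eqP -> /=.
  - by case: ifP => /= H; lra.
  - by case: ifP => /= H; lra.
  - by case: ifP => /= H; lra.
move=> C /mapP [[[s1 s2] s3] _ ->].
pose c (s : bool) : R := if s then 1 else 0.
have [A [B HAB]] := affE (2 - 4 * c s1 + 2 * c s3) (2 * c s2 - 2 * c s3) (2 * c s1 - c s2 - c s3)
   (- 2 * c s1 + 4 * c s3) (2 - 2 * c s2 - 4 * c s3) (c s1 + c s2 - 2 * c s3).
exists A, B => x Hx; rewrite HAB NetE /fx /fy.
have H1 := Hx _ (mem_head _ _).
have H2 := Hx (hp s2 (0, 1, 2^-1)) ltac:(by rewrite !inE eqxx orbT).
have H3 := Hx (hp s3 (1, -1, 2^-1)) ltac:(by rewrite !inE eqxx !orbT).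
clear HAB Hx; move: H1 H2 H3; rewrite /c; case: s1; case: s2; case: s3 => /= H1 H2 H3;
  relus; congr pt; lra.
Qed.

End S.

Theorem mainTheorem4 (R : realType) :
  exists F : 'cV[R]_2 -> 'cV[R]_2,
    CPwL F /\
    (forall t : R, 0 <= t <= 1 -> F (Epar t) = Epar (rmap t)) /\
    exists N : relu_net R 2 2, forall x, F x = net_eval N x.
Proof.
exists (net_eval (Net R)); split; first exact: CPwL_Net.
split; first exact: bdry.
by exists (Net R).
Qed.
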